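(* Let $T>0$, $q>0$, $\eta>0$, $c>0$, $k\ge0$, and let $\lambda:[0,T]\to(0,\infty)$ be non-decreasing and continuously differentiable with $\lambda(0)=1$. There exists a constant $C>0$ depending only on $\lambda$, $c$, $q$ and $\eta$ such that, if $k>\max(4C^2,1)$, the equation $$\partial_t\Lambda(\tau;t)-2k\Lambda(\tau;t)+2\lambda(t-\tau)\Big(\Lambda(t;t)+\frac q2\Big)^2-4\Big(\Lambda(\tau;t)+\frac q2\lambda(t-\tau)\Big)\Big(\Lambda(t;t)+\frac q2\Big)+\frac\eta2\lambda(t-\tau)=0,\qquad \Lambda(\tau;T)=\frac c2\lambda(T-\tau),$$ for $0\le\tau\le t\le T$, admits a unique (continuous, real-valued) solution $\Lambda$ on $\{(\tau,t):0\le\tau\le t\le T\}$. *)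

(* Defs.v *)
From Stdlib Require Import Reals.
From Coquelicot Require Import Coquelicot.
Open Scope R_scope.

Definition cont_within_interval (f : R -> R) (a b x : R) : Prop :=
  filterlim f (within (fun y => a <= y <= b) (locally x)) (locally (f x)).

(* f is continuously differentiable on the closed interval [a,b]:
   continuous on [a,b], differentiable on (a,b), and its derivative
   extends continuously to [a,b] (equivalently: one-sided derivatives at
   the endpoints, derivative continuous on [a,b]). *)
Definition C1_on (f : R -> R) (a b : R) : Prop :=
  exists f' : R -> R,
    (forall x, a <= x <= b -> cont_within_interval f a b x) /\
    (forall x, a < x < b -> is_derive f x (f' x)) /\
    (forall x, a <= x <= b -> cont_within_interval f' a b x).

Definition sol_domain (T : R) (p : (R * R)%type) : Prop :=
  0 <= fst p /\ fst p <= snd p /\ snd p <= T.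

(* Lam (tau;t) is written Lam tau t.  A solution of the equation of Lemma 4.1:
   - continuous (real valued) on the closed triangle;
   - for each tau, t |-> Lam tau t is differentiable on (tau,T) and the
     equation holds there (by continuity on the closed triangle this is the
     usual meaning of the ODE on [tau,T]);
   - terminal condition Lam tau T = c/2 * lam (T - tau). *)
Definition is_solution (T q eta c k : R) (lam : R -> R) (Lam : R -> R -> R) : Prop :=
  (forall tau t, sol_domain T (pair tau t) ->
     filterlim (fun p : (R * R)%type => Lam (fst p) (snd p))
       (within (sol_domain T) (locally (pair tau t))) (locally (Lam tau t))) /\
  (forall tau t, 0 <= tau -> tau < t -> t < T ->
     exists d : R, is_derive (fun s => Lam tau s) t d /\
       d - 2 * k * Lam tau t
       + 2 * lam (t - tau) * (Lam t t + q / 2) ^ 2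
       - 4 * (Lam tau t + q / 2 * lam (t - tau)) * (Lam t t + q / 2)
       + eta / 2 * lam (t - tau) = 0) /\
  (forall tau, 0 <= tau <= T -> Lam tau T = c / 2 * lam (T - tau)).

(* Main.v *)
Require Import Defs.
From Stdlib Require Import Reals.
From Coquelicot Require Import Coquelicot.
From Stdlib Require Import Lra Psatz FunctionalExtensionality.
Open Scope R_scope.


Definition clamp (T x : R) := Rmax 0 (Rmin T x).
Definition Ct (f : R -> R) := forall x, continuous f x.

Lemma clamp_in T x : 0 <= T -> 0 <= clamp T x <= T.
Proof. intros; unfold clamp, Rmax, Rmin; repeat destruct Rle_dec; lra. Qed.

Lemma clamp_id T x : 0 <= x <= T -> clamp T x = x.
Proof. intros; unfold clamp, Rmax, Rmin; repeat destruct Rle_dec; lra. Qed.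

Lemma clamp_lip T x y : 0 <= T -> Rabs (clamp T x - clamp T y) <= Rabs (x - y).
Proof. intros; unfold clamp, Rmax, Rmin; repeat destruct Rle_dec; 
  unfold Rabs; repeat destruct Rcase_abs; lra. Qed.

Lemma clamp_idem T x : 0 <= T -> clamp T (clamp T x) = clamp T x.
Proof. intros; apply clamp_id, clamp_in; auto. Qed.

Lemma ball_R (x y e : R) : ball x e y <-> Rabs (y - x) < e.
Proof. reflexivity. Qed.

Lemma cont_ed (f : R -> R) x :
  (forall eps : posreal, exists d : posreal, forall y, Rabs (y - x) < d -> Rabs (f y - f x) < eps) ->
  continuous f x.
Proof.
  intros H. unfold continuous. apply filterlim_locally. intros eps.
  destruct (H eps) as [d Hd]. exists d. intros y Hy. apply Hd. apply Hy.
Qed.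

Lemma cont_ed_inv (f : R -> R) x : continuous f x ->
  forall eps : posreal, exists d : posreal, forall y, Rabs (y - x) < d -> Rabs (f y - f x) < eps.
Proof.
  intros H eps. unfold continuous in H. apply filterlim_locally with (eps := eps) in H.
  destruct H as [d Hd]. exists d. intros y Hy. apply Hd. apply Hy.
Qed.

Lemma clamp_cont T : 0 <= T -> Ct (clamp T).
Proof.
  intros HT x. apply cont_ed. intros eps. exists eps. intros y Hy.
  eapply Rle_lt_trans. apply clamp_lip; auto. auto.
Qed.

Lemma within_clamp (g : R -> R) T x : 0 <= T ->
  (forall y, 0 <= y <= T -> filterlim g (within (fun z => 0 <= z <= T) (locally y)) (locally (g y))) ->
  continuous (fun z => g (clamp T z)) x.
Proof.
  intros HT Hg. apply cont_ed. intros eps.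
  specialize (Hg (clamp T x) (clamp_in T x HT)).
  apply filterlim_locally with (eps := eps) in Hg.
  destruct Hg as [d Hd]. exists d. intros y Hy. apply Hd.
  - apply ball_R. eapply Rle_lt_trans. apply clamp_lip; auto. auto.
  - apply clamp_in; auto.
Qed.

Lemma Ct_plus f g : Ct f -> Ct g -> Ct (fun x => f x + g x).
Proof. intros Hf Hg x. apply (continuous_plus f g); auto. Qed.
Lemma Ct_mult f g : Ct f -> Ct g -> Ct (fun x => f x * g x).
Proof. intros Hf Hg x. apply (continuous_mult f g); auto. Qed.
Lemma Ct_const a : Ct (fun _ => a).
Proof. intros x. apply continuous_const. Qed.
Lemma Ct_id : Ct (fun x => x).
Proof. intros x. apply continuous_id. Qed.
Lemma Ct_opp f : Ct f -> Ct (fun x => - f x).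
Proof. intros Hf x. apply (continuous_opp f); auto. Qed.
Lemma Ct_comp f g : Ct f -> Ct g -> Ct (fun x => g (f x)).
Proof. intros Hf Hg x. apply (continuous_comp f g); auto. Qed.
Lemma Ct_exp : Ct exp.
Proof. intros x. apply (ex_derive_continuous (V:=R_NormedModule) exp). exists (exp x). apply is_derive_exp. Qed.
Lemma Ct_abs : Ct Rabs.
Proof. intros x. apply cont_ed. intros eps. exists eps. intros y Hy.
  eapply Rle_lt_trans. apply Rabs_triang_inv2. auto. Qed.
Lemma Ct_minus f g : Ct f -> Ct g -> Ct (fun x => f x - g x).
Proof. intros. apply Ct_plus; auto. apply Ct_opp; auto. Qed.
Lemma Ct_ex_RInt f a b : Ct f -> ex_RInt f a b.
Proof. intros H. apply (ex_RInt_continuous (V:=R_CompleteNormedModule)). intros; apply H. Qed.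


Lemma chasles f a b c0 : Ct f -> RInt f a b + RInt f b c0 = RInt f a c0.
Proof. intros H. apply (RInt_Chasles (V:=R_CompleteNormedModule)); apply Ct_ex_RInt; auto. Qed.

Lemma RInt_sw f a b : Ct f -> RInt f b a = - RInt f a b.
Proof. intros H. rewrite <- (opp_RInt_swap (V:=R_CompleteNormedModule)). reflexivity. apply Ct_ex_RInt; auto. Qed.

Lemma RInt_pt f a : RInt f a a = 0.
Proof. apply (RInt_point (V:=R_CompleteNormedModule)). Qed.

Lemma RInt_lower_deriv f a t : Ct f -> is_derive (fun x => RInt f a x) t (f t).
Proof.
  intros H. apply (is_derive_RInt (V:=R_CompleteNormedModule)) with (a:=a).
  - apply filter_forall. intros b. apply (RInt_correct (V:=R_CompleteNormedModule)). apply Ct_ex_RInt; auto.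
  - apply H.
Qed.



Lemma RInt_upper_deriv f b t : Ct f -> is_derive (fun x => RInt f x b) t (- f t).
Proof.
  intros H.
  assert (H1 : is_derive (fun x => RInt f 0 b - RInt f 0 x) t (0 - f t)).
  { apply (is_derive_minus (fun _ => RInt f 0 b) (fun x => RInt f 0 x)).
    apply (is_derive_const (K:=R_AbsRing) (V:=R_NormedModule)). apply RInt_lower_deriv; auto. }
  replace (- f t) with (0 - f t) by ring.
  eapply is_derive_ext; [|exact H1]. intros x. simpl. rewrite <- (chasles f 0 x b H). ring.
Qed.

Lemma RInt_abs_le f a b M : Ct f -> a <= b -> (forall x, a <= x <= b -> Rabs (f x) <= M) ->
  Rabs (RInt f a b) <= (b - a) * M.
Proof. intros H Hab HM. apply abs_RInt_le_const; auto. apply Ct_ex_RInt; auto. Qed.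

Lemma RInt_abs_le2 f a b M : Ct f -> (forall x, Rmin a b <= x <= Rmax a b -> Rabs (f x) <= M) ->
  Rabs (RInt f a b) <= Rabs (b - a) * M.
Proof.
  intros H HM. destruct (Rle_dec a b).
  - rewrite (Rabs_right (b - a)) by lra. apply RInt_abs_le; auto. intros x Hx; apply HM.
    rewrite Rmin_left by lra; rewrite Rmax_right by lra; lra.
  - rewrite RInt_sw, Rabs_Ropp by auto. rewrite (Rabs_left (b - a)) by lra.
    replace (- (b - a)) with (a - b) by ring. apply RInt_abs_le; auto. lra.
    intros x Hx; apply HM. rewrite Rmin_right by lra; rewrite Rmax_left by lra; lra.
Qed.

Lemma RInt_mono f g a b : Ct f -> Ct g -> a <= b -> (forall x, a <= x <= b -> f x <= g x) ->
  RInt f a b <= RInt g a b.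
Proof. intros Hf Hg Hab H. apply RInt_le; auto; try apply Ct_ex_RInt; auto. intros; apply H; lra. Qed.

Lemma RInt_cst a b v : RInt (fun _ => v) a b = (b - a) * v.
Proof. rewrite (RInt_const (V:=R_CompleteNormedModule)). reflexivity. Qed.

Lemma RInt_nonneg f a b : Ct f -> a <= b -> (forall x, a <= x <= b -> 0 <= f x) -> 0 <= RInt f a b.
Proof. intros Hf Hab H. apply RInt_ge_0; auto. apply Ct_ex_RInt; auto. intros; apply H; lra. Qed.

Lemma RInt_abs_int f a b : Ct f -> a <= b -> Rabs (RInt f a b) <= RInt (fun x => Rabs (f x)) a b.
Proof. intros Hf Hab. apply abs_RInt_le; auto. apply Ct_ex_RInt; auto. Qed.

Lemma RInt_minus' f g a b : Ct f -> Ct g -> RInt (fun x => f x - g x) a b = RInt f a b - RInt g a b.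
Proof. intros Hf Hg. apply (RInt_minus (V:=R_CompleteNormedModule)); apply Ct_ex_RInt; auto. Qed.

Lemma RInt_plus' f g a b : Ct f -> Ct g -> RInt (fun x => f x + g x) a b = RInt f a b + RInt g a b.
Proof. intros Hf Hg. apply (RInt_plus (V:=R_CompleteNormedModule)); apply Ct_ex_RInt; auto. Qed.

Lemma RInt_scal' f a b l : Ct f -> RInt (fun x => l * f x) a b = l * RInt f a b.
Proof. intros Hf. apply (RInt_scal (V:=R_CompleteNormedModule)); apply Ct_ex_RInt; auto. Qed.

Lemma RInt_ext' (f g : R -> R) a b : (forall x, Rmin a b <= x <= Rmax a b -> @eq R (f x) (g x)) -> @eq R (RInt (V:=R_CompleteNormedModule) f a b) (RInt g a b).
Proof. intros H. apply RInt_ext. intros x Hx. apply H; lra. Qed.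

Lemma RInt_expk k t b : 0 < k -> t <= b -> RInt (fun s => exp (- k * (s - t))) t b <= / k.
Proof.
  intros Hk Htb.
  assert (Hi : is_RInt (fun s => exp (- k * (s - t))) t b
      (minus (- / k * exp (- k * (b - t))) (- / k * exp (- k * (t - t))))).
  { apply (is_RInt_derive (V:=R_CompleteNormedModule) (fun s => - / k * exp (- k * (s - t)))).
    - intros x _. auto_derive. auto. replace (x + - t) with (x - t) by ring. field. lra.
    - intros x _. apply (Ct_comp (fun s => - k * (s - t)) exp); [|apply Ct_exp].
      apply Ct_mult. apply Ct_const. apply Ct_minus. apply Ct_id. apply Ct_const. }
  rewrite (is_RInt_unique _ _ _ _ Hi). unfold minus, plus, opp; simpl.
  replace (t - t) with 0 by ring. rewrite Rmult_0_r, exp_0.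
  assert (0 < exp (- k * (b - t))) by apply exp_pos.
  assert (0 < / k) by (apply Rinv_0_lt_compat; lra).
  nra.
Qed.


Definition Aint (k : R) (u : R -> R) (t : R) := RInt (fun s => 2 * k + 4 * u s) 0 t.
Definition Ek k u t s := exp (Aint k u t - Aint k u s).
Definition Fq (q eta x : R) := 2 * x ^ 2 - 2 * q * x + eta / 2.
Definition lamc (T : R) (lam : R -> R) (x : R) := lam (clamp T x).
Definition Lamf T q eta c k lam u tau t :=
  Ek k u t T * (c / 2 * lamc T lam (T - tau))
  + RInt (fun s => Ek k u t s * (lamc T lam (s - tau) * Fq q eta (u s))) t T.
Definition Psi T q eta c k lam u t := q / 2 + Lamf T q eta c k lam u t t.

Lemma Ct_g k u : Ct u -> Ct (fun s => 2 * k + 4 * u s).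
Proof. intros. apply Ct_plus. apply Ct_const. apply Ct_mult. apply Ct_const. auto. Qed.

Lemma Aint_derive k u t : Ct u -> is_derive (Aint k u) t (2 * k + 4 * u t).
Proof. intros Hu. apply (RInt_lower_deriv (fun s => 2 * k + 4 * u s)). apply Ct_g; auto. Qed.

Lemma Aint_cont k u : Ct u -> Ct (Aint k u).
Proof. intros Hu x. apply (ex_derive_continuous (V:=R_NormedModule)). eexists. apply Aint_derive; auto. Qed.

Lemma Aint_diff k u t s : Ct u -> Aint k u s - Aint k u t = RInt (fun r => 2 * k + 4 * u r) t s.
Proof. intros Hu. unfold Aint. rewrite <- (chasles _ 0 t s (Ct_g k u Hu)). ring. Qed.

Lemma Ct_Ek k u t : Ct u -> Ct (fun s => Ek k u t s).
Proof. intros Hu. unfold Ek. apply (Ct_comp (fun s => Aint k u t - Aint k u s) exp); [|apply Ct_exp].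
  apply Ct_minus. apply Ct_const. apply Aint_cont; auto. Qed.

Lemma Ek_pos k u t s : 0 < Ek k u t s.
Proof. apply exp_pos. Qed.


Lemma exp_mono x y : x <= y -> exp x <= exp y.
Proof. intros H. destruct (Req_dec x y). subst; lra. left. apply exp_increasing. lra. Qed.

Lemma Ek_eq k u t s : Ct u -> Ek k u t s = exp (- RInt (fun r => 2 * k + 4 * u r) t s).
Proof. intros Hu. unfold Ek. rewrite <- Aint_diff by auto. f_equal. ring. Qed.

Lemma Ek_le k u t s kap : Ct u -> t <= s -> (forall r, t <= r <= s -> kap <= 2 * k + 4 * u r) ->
  Ek k u t s <= exp (- kap * (s - t)).
Proof.
  intros Hu Hts H. rewrite Ek_eq by auto. apply exp_mono.
  assert (RInt (fun _ => kap) t s <= RInt (fun r => 2 * k + 4 * u r) t s).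
  { apply RInt_mono; auto. apply Ct_const. apply Ct_g; auto. }
  rewrite RInt_cst in H0. nra.
Qed.

Lemma exp_diff_le a b m : m <= a -> m <= b -> Rabs (exp (- a) - exp (- b)) <= exp (- m) * Rabs (a - b).
Proof.
  intros Ha Hb.
  assert (G : forall a b, m <= a -> a <= b -> Rabs (exp (- a) - exp (- b)) <= exp (- m) * Rabs (a - b)).
  { clear a b Ha Hb. intros a b Ha Hab.
    assert (E : exp (- b) = exp (- a) * exp (- (b - a))) by (rewrite <- exp_plus; f_equal; ring).
    assert (H1 := exp_ineq1_le (- (b - a))).
    assert (H2 : exp (- b) <= exp (- a)) by (apply exp_mono; lra).
    assert (H3 : exp (- a) <= exp (- m)) by (apply exp_mono; lra).
    assert (H4 := exp_pos (- a)). assert (H5 := exp_pos (-(b-a))).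
    rewrite Rabs_right by lra. rewrite (Rabs_left1 (a - b)) by lra.
    rewrite E. assert (exp (- a) * (1 - exp (- (b - a))) <= exp (- a) * (b - a)) by (apply Rmult_le_compat_l; lra).
    assert (exp (- a) * (b - a) <= exp (- m) * (b - a)) by (apply Rmult_le_compat_r; lra).
    nra. }
  destruct (Rle_dec a b). apply G; auto.
  rewrite <- Rabs_Ropp, (Rabs_minus_sym a b). replace (- (exp (- a) - exp (- b))) with (exp (- b) - exp (- a)) by ring.
  apply G; lra.
Qed.

Lemma Ek_diff k u v t s kap : Ct u -> Ct v -> t <= s ->
  (forall r, t <= r <= s -> kap <= 2 * k + 4 * u r) ->
  (forall r, t <= r <= s -> kap <= 2 * k + 4 * v r) ->
  Rabs (Ek k u t s - Ek k v t s) <= exp (- kap * (s - t)) * RInt (fun r => 4 * Rabs (u r - v r)) t s.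
Proof.
  intros Hu Hv Hts H1 H2. rewrite !Ek_eq by auto.
  assert (A1 : kap * (s - t) <= RInt (fun r => 2 * k + 4 * u r) t s).
  { rewrite Rmult_comm, <- (RInt_cst t s). apply RInt_mono; auto. apply Ct_const. apply Ct_g; auto. }
  assert (A2 : kap * (s - t) <= RInt (fun r => 2 * k + 4 * v r) t s).
  { rewrite Rmult_comm, <- (RInt_cst t s). apply RInt_mono; auto. apply Ct_const. apply Ct_g; auto. }
  eapply Rle_trans. apply exp_diff_le; eauto.
  replace (- (kap * (s - t))) with (- kap * (s - t)) by ring.
  apply Rmult_le_compat_l. left; apply exp_pos.
  rewrite <- RInt_minus' by (apply Ct_g; auto).
  eapply Rle_trans. apply RInt_abs_int; auto. apply Ct_minus; apply Ct_g; auto.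
  right. apply RInt_ext'. intros x _.
  replace (2 * k + 4 * u x - (2 * k + 4 * v x)) with (4 * (u x - v x)) by ring.
  rewrite Rabs_mult, (Rabs_right 4) by lra. auto.
Qed.

Lemma Fq_bound q eta B x : 0 < q -> 0 < eta -> Rabs x <= B -> Rabs (Fq q eta x) <= 2 * B ^ 2 + 2 * q * B + eta / 2.
Proof.
  intros Hq He Hx. unfold Fq. assert (0 <= B) by (eapply Rle_trans; [apply Rabs_pos|eauto]).
  assert (Hx2 : x ^ 2 <= B ^ 2). { rewrite <- (pow2_abs x). apply pow_incr. split; auto. apply Rabs_pos. }
  assert (Hqx : Rabs (2 * q * x) <= 2 * q * B). { rewrite Rabs_mult, (Rabs_right (2*q)) by lra. apply Rmult_le_compat_l; lra. }
  eapply Rle_trans. apply Rabs_triang. eapply Rle_trans. apply Rplus_le_compat_r. apply Rabs_triang.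
  rewrite Rabs_Ropp, (Rabs_right (eta / 2)) by lra. rewrite (Rabs_right (2 * x ^ 2)).
  lra. assert (0 <= x ^ 2) by (apply pow2_ge_0). lra.
Qed.

Lemma Fq_lip q eta B x y : 0 < q -> Rabs x <= B -> Rabs y <= B ->
  Rabs (Fq q eta x - Fq q eta y) <= (4 * B + 2 * q) * Rabs (x - y).
Proof.
  intros Hq Hx Hy. unfold Fq.
  replace (2 * x ^ 2 - 2 * q * x + eta / 2 - (2 * y ^ 2 - 2 * q * y + eta / 2))
    with ((2 * (x + y) - 2 * q) * (x - y)) by ring.
  rewrite Rabs_mult. apply Rmult_le_compat_r. apply Rabs_pos.
  eapply Rle_trans. apply Rabs_triang. rewrite Rabs_Ropp, Rabs_mult, (Rabs_right 2) by lra.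
  rewrite (Rabs_right (2 * q)) by lra.
  assert (Rabs (x + y) <= 2 * B) by (eapply Rle_trans; [apply Rabs_triang|lra]). lra.
Qed.

Lemma xexp_le k x : 0 < k -> 0 <= x -> exp (- k * x) * x <= / k.
Proof.
  intros Hk Hx. assert (H := exp_ineq1_le (k * x)).
  assert (E : exp (- k * x) = / exp (k * x)) by (rewrite <- exp_Ropp; f_equal; ring).
  rewrite E. assert (0 < exp (k * x)) by apply exp_pos.
  apply (Rmult_le_reg_l (k * exp (k * x))). nra.
  field_simplify; try lra.
Qed.


Definition FmB q eta B := 2 * B ^ 2 + 2 * q * B + eta / 2.
Definition FLB q B := 4 * B + 2 * q.

Lemma Ct_Fq q eta : Ct (Fq q eta).
Proof. unfold Fq. intros x. apply (ex_derive_continuous (V:=R_NormedModule)). auto_derive. auto. Qed.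

Lemma Ct_integrand T q eta k lam u t tau : Ct u -> Ct (lamc T lam) ->
  Ct (fun s => Ek k u t s * (lamc T lam (s - tau) * Fq q eta (u s))).
Proof.
  intros Hu HL. apply Ct_mult. apply Ct_Ek; auto. apply Ct_mult.
  apply (Ct_comp (fun s => s - tau) (lamc T lam)); auto. apply Ct_minus. apply Ct_id. apply Ct_const.
  apply Ct_comp; auto. apply Ct_Fq.
Qed.

Lemma pw_diff (Eu Ev l Fu Fv Lm Fm FL W d : R) :
  0 <= l <= Lm -> Rabs Fu <= Fm -> Rabs (Fu - Fv) <= FL * d -> 0 <= Ev <= W -> 0 <= FL ->
  Rabs (Eu * (l * Fu) - Ev * (l * Fv)) <= Rabs (Eu - Ev) * (Lm * Fm) + W * (Lm * (FL * d)).
Proof.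
  intros Hl HF HFd HE HFL.
  replace (Eu * (l * Fu) - Ev * (l * Fv)) with ((Eu - Ev) * (l * Fu) + Ev * (l * (Fu - Fv))) by ring.
  eapply Rle_trans. apply Rabs_triang. rewrite !Rabs_mult.
  rewrite (Rabs_right l) by lra. rewrite (Rabs_right Ev) by lra.
  assert (0 <= Rabs (Eu - Ev)) by apply Rabs_pos.
  assert (0 <= Rabs Fu) by apply Rabs_pos. assert (0 <= Rabs (Fu - Fv)) by apply Rabs_pos.
  apply Rplus_le_compat.
  - apply Rmult_le_compat_l; auto. apply Rmult_le_compat; lra.
  - apply Rmult_le_compat; try lra. apply Rmult_le_pos; lra. apply Rmult_le_compat; lra.
Qed.

Lemma Lamf_bound T q eta c k lam u Lm B tau t :
  0 < q -> 0 < eta -> 0 < c -> 0 < k -> 0 <= B -> 4 * B <= k ->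
  (forall x, 0 <= lamc T lam x <= Lm) -> Ct (lamc T lam) -> Ct u ->
  (forall s, 0 <= s <= T -> Rabs (u s) <= B) -> 0 <= t <= T ->
  Rabs (Lamf T q eta c k lam u tau t) <= c / 2 * Lm + Lm * FmB q eta B / k.
Proof.
  intros Hq He Hc Hk HB HkB HL HLc Hu HuB Ht. unfold Lamf.
  assert (Hkap : forall r, t <= r <= T -> k <= 2 * k + 4 * u r).
  { intros r Hr. assert (H := HuB r ltac:(lra)). apply Rabs_le_between in H. lra. }
  eapply Rle_trans. apply Rabs_triang. apply Rplus_le_compat.
  - rewrite Rabs_mult. rewrite (Rabs_right (Ek k u t T)) by (left; apply Ek_pos).
    assert (E1 : Ek k u t T <= 1).
    { eapply Rle_trans. apply (Ek_le k u t T k); auto; lra. rewrite <- exp_0. apply exp_mono. nra. }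
    assert (E2 : Rabs (c / 2 * lamc T lam (T - tau)) <= c / 2 * Lm).
    { rewrite Rabs_right. specialize (HL (T - tau)). nra. specialize (HL (T - tau)). nra. }
    assert (0 < Ek k u t T) by apply Ek_pos. assert (0 <= Rabs (c / 2 * lamc T lam (T - tau))) by apply Rabs_pos. nra.
  - eapply Rle_trans. apply RInt_abs_int. apply Ct_integrand; auto. lra.
    eapply Rle_trans. apply RInt_mono with (g := fun s => Lm * FmB q eta B * exp (- k * (s - t))).
    apply Ct_comp. apply Ct_integrand; auto. apply Ct_abs.
    apply Ct_mult. apply Ct_const. apply (Ct_comp (fun s => - k * (s - t)) exp); [|apply Ct_exp].
      apply Ct_mult. apply Ct_const. apply Ct_minus. apply Ct_id. apply Ct_const.
    lra.
    + intros s Hs. rewrite !Rabs_mult. rewrite (Rabs_right (Ek k u t s)) by (left; apply Ek_pos).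
      rewrite (Rabs_right (lamc T lam (s - tau))) by (specialize (HL (s - tau)); lra).
      assert (E1 : Ek k u t s <= exp (- k * (s - t))) by (apply Ek_le; auto; try lra; intros; apply Hkap; lra).
      assert (F1 : Rabs (Fq q eta (u s)) <= FmB q eta B) by (apply Fq_bound; auto; apply HuB; lra).
      assert (0 < Ek k u t s) by apply Ek_pos. specialize (HL (s - tau)).
      assert (0 <= Rabs (Fq q eta (u s))) by apply Rabs_pos.
      assert (0 <= lamc T lam (s - tau) * Rabs (Fq q eta (u s)) <= Lm * FmB q eta B) by (split; nra).
      nra.
    + rewrite RInt_scal'. 
      assert (H1 := RInt_expk k t T Hk ltac:(lra)).
      assert (0 <= Lm) by (specialize (HL 0); lra).
      assert (0 <= FmB q eta B) by (unfold FmB; nra).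
      unfold Rdiv. apply Rmult_le_compat_l. nra. auto.
      apply (Ct_comp (fun s => - k * (s - t)) exp); [|apply Ct_exp].
      apply Ct_mult. apply Ct_const. apply Ct_minus. apply Ct_id. apply Ct_const.
Qed.

Lemma Ct_expk k t : Ct (fun s => exp (- k * (s - t))).
Proof. apply (Ct_comp (fun s => - k * (s - t)) exp); [|apply Ct_exp].
  apply Ct_mult. apply Ct_const. apply Ct_minus. apply Ct_id. apply Ct_const. Qed.

Lemma Lamf_split T q eta c k lam u v tau t : Ct u -> Ct v -> Ct (lamc T lam) ->
  Lamf T q eta c k lam u tau t - Lamf T q eta c k lam v tau t =
  (Ek k u t T - Ek k v t T) * (c / 2 * lamc T lam (T - tau)) +
  RInt (fun s => Ek k u t s * (lamc T lam (s - tau) * Fq q eta (u s)) - Ek k v t s * (lamc T lam (s - tau) * Fq q eta (v s))) t T.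
Proof.
  intros Hu Hv HL. unfold Lamf. rewrite RInt_minus' by (apply Ct_integrand; auto). ring.
Qed.

Lemma Lamf_lip T q eta c k lam u v Lm B d tau t :
  0 < q -> 0 < eta -> 0 < c -> 0 < k -> 0 <= B -> 4 * B <= k -> 0 <= d ->
  (forall x, 0 <= lamc T lam x <= Lm) -> Ct (lamc T lam) -> Ct u -> Ct v ->
  (forall s, 0 <= s <= T -> Rabs (u s) <= B) ->
  (forall s, 0 <= s <= T -> Rabs (v s) <= B) ->
  (forall s, 0 <= s <= T -> Rabs (u s - v s) <= d) -> 0 <= t <= T ->
  Rabs (Lamf T q eta c k lam u tau t - Lamf T q eta c k lam v tau t)
    <= (2 * c * Lm + 4 * T * Lm * FmB q eta B + Lm * FLB q B) * d / k.
Proof.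
  intros Hq He Hc Hk HB HkB Hd HL HLc Hu Hv HuB HvB Huv Ht.
  rewrite Lamf_split by auto.
  assert (HLm : 0 <= Lm) by (specialize (HL 0); lra).
  assert (HFm : 0 <= FmB q eta B) by (unfold FmB; nra).
  assert (HFL : 0 <= FLB q B) by (unfold FLB; nra).
  assert (Hkapu : forall r, t <= r <= T -> k <= 2 * k + 4 * u r).
  { intros r Hr. assert (H := HuB r ltac:(lra)). apply Rabs_le_between in H. lra. }
  assert (Hkapv : forall r, t <= r <= T -> k <= 2 * k + 4 * v r).
  { intros r Hr. assert (H := HvB r ltac:(lra)). apply Rabs_le_between in H. lra. }
  assert (ED : forall s, t <= s <= T -> Rabs (Ek k u t s - Ek k v t s) <= 4 * d / k).
  { intros s Hs. eapply Rle_trans. apply (Ek_diff k u v t s k); auto; try lra.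
    intros; apply Hkapu; lra. intros; apply Hkapv; lra.
    assert (I1 : RInt (fun r => 4 * Rabs (u r - v r)) t s <= (s - t) * (4 * d)).
    { rewrite <- RInt_cst. apply RInt_mono; try lra. apply Ct_mult. apply Ct_const.
      apply Ct_comp. apply Ct_minus; auto. apply Ct_abs. apply Ct_const.
      intros r Hr. assert (H := Huv r ltac:(lra)). lra. }
    assert (X := xexp_le k (s - t) Hk ltac:(lra)).
    assert (0 < exp (- k * (s - t))) by apply exp_pos.
    apply Rle_trans with (exp (- k * (s - t)) * ((s - t) * (4 * d))).
    apply Rmult_le_compat_l; lra.
    replace (4 * d / k) with (4 * d * / k) by (unfold Rdiv; ring). nra. }
  eapply Rle_trans. apply Rabs_triang.
  apply Rle_trans with (2 * c * Lm * d / k + (4 * T * Lm * FmB q eta B + Lm * FLB q B) * d / k);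
    [|right; field; lra].
  apply Rplus_le_compat.
  - rewrite Rabs_mult. specialize (ED T ltac:(lra)).
    assert (L1 : Rabs (c / 2 * lamc T lam (T - tau)) <= c / 2 * Lm).
    { rewrite Rabs_right. specialize (HL (T - tau)). nra. specialize (HL (T - tau)). nra. }
    assert (0 <= Rabs (Ek k u t T - Ek k v t T)) by apply Rabs_pos.
    apply Rle_trans with (4 * d / k * (c / 2 * Lm)).
    apply Rmult_le_compat; auto; apply Rabs_pos. right; field; lra.
  - eapply Rle_trans. apply RInt_abs_int. apply Ct_minus; apply Ct_integrand; auto. lra.
    eapply Rle_trans. apply RInt_mono with
      (g := fun s => 4 * d / k * (Lm * FmB q eta B) + exp (- k * (s - t)) * (Lm * (FLB q B * d))).
    apply Ct_comp. apply Ct_minus; apply Ct_integrand; auto. apply Ct_abs.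
    apply Ct_plus. apply Ct_const. apply Ct_mult. apply Ct_expk. apply Ct_const. lra.
    + intros s Hs. eapply Rle_trans. apply (pw_diff _ _ _ _ _ Lm (FmB q eta B) (FLB q B) (exp (- k * (s - t))) d).
      * specialize (HL (s - tau)); lra.
      * apply Fq_bound; auto. apply HuB; lra.
      * eapply Rle_trans. apply Fq_lip; auto. apply HuB; lra. apply HvB; lra. unfold FLB. apply Rmult_le_compat_l. lra. apply Huv; lra.
      * split. left; apply Ek_pos. apply Ek_le; auto; try lra. intros; apply Hkapv; lra.
      * auto.
      * apply Rplus_le_compat_r. apply Rmult_le_compat_r. nra. apply ED; lra.
    + rewrite RInt_plus'; [| apply Ct_const | apply Ct_mult; [apply Ct_expk|apply Ct_const]].
      rewrite RInt_cst.
      assert (EQ : RInt (fun s => exp (- k * (s - t)) * (Lm * (FLB q B * d))) t T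
                  = (Lm * (FLB q B * d)) * RInt (fun s => exp (- k * (s - t))) t T).
      { rewrite <- RInt_scal'; [apply RInt_ext'; intros; apply Rmult_comm | apply Ct_expk]. }
      rewrite EQ. assert (H1 := RInt_expk k t T Hk ltac:(lra)).
      assert (H2 : (T - t) * (4 * d / k * (Lm * FmB q eta B)) <= T * (4 * d / k * (Lm * FmB q eta B))).
      { apply Rmult_le_compat_r; try lra. unfold Rdiv. apply Rmult_le_pos. apply Rmult_le_pos. lra.
        left; apply Rinv_0_lt_compat; lra. nra. }
      assert (H3 : Lm * (FLB q B * d) * RInt (fun s => exp (- k * (s - t))) t T <= Lm * (FLB q B * d) * / k).
      { apply Rmult_le_compat_l; auto. apply Rmult_le_pos; auto. apply Rmult_le_pos; auto. }
      apply Rle_trans with (T * (4 * d / k * (Lm * FmB q eta B)) + Lm * (FLB q B * d) * / k). lra.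
      right. field. lra.
Qed.

Lemma RInt_sub_le f t s T : Ct f -> t <= s <= T -> (forall x, t <= x <= T -> 0 <= f x) ->
  RInt f t s <= RInt f t T.
Proof.
  intros Hf Hs H. rewrite <- (chasles f t s T Hf).
  assert (0 <= RInt f s T) by (apply RInt_nonneg; auto; try lra; intros; apply H; lra). lra.
Qed.

Lemma Lamf_lip2 T q eta c k lam u v Lm M tau t :
  0 < T -> 0 < q -> 0 < eta -> 0 < c -> 0 <= k -> 0 <= M ->
  (forall x, 0 <= lamc T lam x <= Lm) -> Ct (lamc T lam) -> Ct u -> Ct v ->
  (forall s, 0 <= s <= T -> Rabs (u s) <= M) ->
  (forall s, 0 <= s <= T -> Rabs (v s) <= M) -> 0 <= t <= T ->
  Rabs (Lamf T q eta c k lam u tau t - Lamf T q eta c k lam v tau t)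
    <= exp (4 * M * T) * (2 * c * Lm + 4 * T * Lm * FmB q eta M + Lm * FLB q M)
       * RInt (fun s => Rabs (u s - v s)) t T.
Proof.
  intros HT Hq He Hc Hk HM HL HLc Hu Hv HuB HvB Ht.
  rewrite Lamf_split by auto.
  set (X := exp (4 * M * T)). set (I := RInt (fun s => Rabs (u s - v s)) t T).
  assert (HCa : Ct (fun s => Rabs (u s - v s))) by (apply Ct_comp; [apply Ct_minus; auto|apply Ct_abs]).
  assert (HI : 0 <= I) by (apply RInt_nonneg; auto; try lra; intros; apply Rabs_pos).
  assert (HX : 0 < X) by apply exp_pos.
  assert (HLm : 0 <= Lm) by (specialize (HL 0); lra).
  assert (HFm : 0 <= FmB q eta M) by (unfold FmB; nra).
  assert (HFL : 0 <= FLB q M) by (unfold FLB; nra).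
  assert (Hkapu : forall r, t <= r <= T -> - 4 * M <= 2 * k + 4 * u r).
  { intros r Hr. assert (H := HuB r ltac:(lra)). apply Rabs_le_between in H. lra. }
  assert (Hkapv : forall r, t <= r <= T -> - 4 * M <= 2 * k + 4 * v r).
  { intros r Hr. assert (H := HvB r ltac:(lra)). apply Rabs_le_between in H. lra. }
  assert (EX : forall s, t <= s <= T -> exp (- (- 4 * M) * (s - t)) <= X).
  { intros s Hs. apply exp_mono. nra. }
  assert (ED : forall s, t <= s <= T -> Rabs (Ek k u t s - Ek k v t s) <= X * (4 * I)).
  { intros s Hs. eapply Rle_trans. apply (Ek_diff k u v t s (- 4 * M)); auto; try lra.
    intros; apply Hkapu; lra. intros; apply Hkapv; lra.
    assert (I1 : RInt (fun r => 4 * Rabs (u r - v r)) t s <= 4 * I).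
    { rewrite RInt_scal' by auto. apply Rmult_le_compat_l. lra. apply RInt_sub_le; auto.
      intros; apply Rabs_pos. }
    assert (0 <= RInt (fun r => 4 * Rabs (u r - v r)) t s).
    { apply RInt_nonneg; try lra. apply Ct_mult; auto. apply Ct_const. intros; assert (0 <= Rabs (u x - v x)) by apply Rabs_pos; lra. }
    apply Rmult_le_compat; auto. left; apply exp_pos. }
  eapply Rle_trans. apply Rabs_triang.
  apply Rle_trans with (2 * c * Lm * X * I + (4 * T * Lm * FmB q eta M + Lm * FLB q M) * X * I);
    [|right; ring].
  apply Rplus_le_compat.
  - rewrite Rabs_mult. specialize (ED T ltac:(lra)).
    assert (L1 : Rabs (c / 2 * lamc T lam (T - tau)) <= c / 2 * Lm).
    { rewrite Rabs_right. specialize (HL (T - tau)). nra. specialize (HL (T - tau)). nra. }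
    apply Rle_trans with (X * (4 * I) * (c / 2 * Lm)).
    apply Rmult_le_compat; auto; apply Rabs_pos. right; field.
  - eapply Rle_trans. apply RInt_abs_int. apply Ct_minus; apply Ct_integrand; auto. lra.
    eapply Rle_trans. apply RInt_mono with
      (g := fun s => X * (4 * I) * (Lm * FmB q eta M) + X * (Lm * (FLB q M * Rabs (u s - v s)))).
    apply Ct_comp. apply Ct_minus; apply Ct_integrand; auto. apply Ct_abs.
    apply Ct_plus. apply Ct_const. apply Ct_mult. apply Ct_const. apply Ct_mult. apply Ct_const.
      apply Ct_mult. apply Ct_const. auto. lra.
    + intros s Hs. eapply Rle_trans. apply (pw_diff _ _ _ _ _ Lm (FmB q eta M) (FLB q M) X (Rabs (u s - v s))).
      * specialize (HL (s - tau)); lra.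
      * apply Fq_bound; auto. apply HuB; lra.
      * apply Fq_lip; auto. apply HuB; lra. apply HvB; lra.
      * split. left; apply Ek_pos. eapply Rle_trans. apply Ek_le; auto; try lra. intros; apply Hkapv; lra. apply EX; lra.
      * auto.
      * apply Rplus_le_compat_r. apply Rmult_le_compat_r. nra. apply ED; lra.
    + rewrite RInt_plus'; [| apply Ct_const | apply Ct_mult; [apply Ct_const | apply Ct_mult; [apply Ct_const|apply Ct_mult; [apply Ct_const|auto]]]].
      rewrite RInt_cst.
      assert (EQ : RInt (fun s => X * (Lm * (FLB q M * Rabs (u s - v s)))) t T = (X * Lm * FLB q M) * I).
      { unfold I. rewrite <- RInt_scal'; [apply RInt_ext'; intros; ring | auto]. }
      rewrite EQ.
      assert (H2 : (T - t) * (X * (4 * I) * (Lm * FmB q eta M)) <= T * (X * (4 * I) * (Lm * FmB q eta M))).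
      { apply Rmult_le_compat_r; try lra. apply Rmult_le_pos. nra. nra. }
      lra.
Qed.


Lemma cont2_ed (f : R -> R -> R) x0 y0 :
  (forall eps : posreal, exists d : posreal, forall x y, Rabs (x - x0) < d -> Rabs (y - y0) < d ->
     Rabs (f x y - f x0 y0) < eps) ->
  continuous (fun p : R * R => f (fst p) (snd p)) (x0, y0).
Proof.
  intros H. unfold continuous. apply filterlim_locally. intros eps.
  destruct (H eps) as [d Hd]. exists d. intros [x y] [H1 H2]. apply Hd; auto.
Qed.

Lemma Ct_cpt f x : Ct f -> continuity_pt f x.
Proof. intros H. apply continuity_pt_filterlim. apply H. Qed.

Lemma bound_on f a b : Ct f -> a <= b -> exists M, 0 <= M /\ forall x, a <= x <= b -> Rabs (f x) <= M.
Proof.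
  intros Hf Hab. destruct (continuity_ab_maj (fun x => Rabs (f x)) a b Hab) as [Mx [HM _]].
  intros; apply Ct_cpt. apply Ct_comp; auto. apply Ct_abs.
  exists (Rabs (f Mx)). split. apply Rabs_pos. auto.
Qed.

Lemma G_cont (a b l : R -> R) T Lb tau0 t0 : Ct a -> Ct b -> Ct l -> (forall x, Rabs (l x) <= Lb) ->
  continuous (fun p : R * R => RInt (fun s => a s * (l (s - fst p) * b s)) (snd p) T) (tau0, t0).
Proof.
  intros Ha Hb Hl HLb.
  set (G := fun tau t => RInt (fun s => a s * (l (s - tau) * b s)) t T).
  change (continuous (fun p : R * R => G (fst p) (snd p)) (tau0, t0)).
  apply cont2_ed. intros eps.
  set (j1 := Rmin t0 T - 1). set (j2 := Rmax t0 T + 1).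
  assert (Hj : j1 <= j2) by (unfold j1, j2, Rmin, Rmax; repeat destruct Rle_dec; lra).
  assert (Hab : Ct (fun s => a s * b s)) by (apply Ct_mult; auto).
  destruct (bound_on _ j1 j2 Hab Hj) as [Hm [HHm HHb]].
  assert (HLb0 : 0 <= Lb) by (eapply Rle_trans; [apply Rabs_pos|apply (HLb 0)]).
  assert (Hgc : forall tau, Ct (fun s => a s * (l (s - tau) * b s))).
  { intros tau. apply Ct_mult; auto. apply Ct_mult; auto.
    apply (Ct_comp (fun s => s - tau) l); auto. apply Ct_minus. apply Ct_id. apply Ct_const. }
  set (eps1 := eps / (2 * (Hm + 1) * (Rabs (T - t0) + 1))).
  assert (Heps1 : 0 < eps1).
  { unfold eps1. apply Rdiv_lt_0_compat. apply eps. assert (0 <= Rabs (T - t0)) by apply Rabs_pos. nra. }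
  destruct (@Heine_cor2 l (j1 - tau0 - 1) (j2 - tau0 + 1) (fun x _ => Ct_cpt l x Hl) (mkposreal eps1 Heps1)) as [d1 Hd1].
  set (eps2 := eps / (2 * (Hm * Lb + 1))).
  assert (Heps2 : 0 < eps2).
  { unfold eps2. apply Rdiv_lt_0_compat. apply eps. nra. }
  assert (Hd : 0 < Rmin 1 (Rmin d1 eps2)).
  { apply Rmin_pos. lra. apply Rmin_pos. apply d1. auto. }
  exists (mkposreal _ Hd). simpl. intros tau t Htau Ht.
  assert (Hd1' : Rmin 1 (Rmin d1 eps2) <= 1) by apply Rmin_l.
  assert (Hd2' : Rmin 1 (Rmin d1 eps2) <= d1) by (eapply Rle_trans; [apply Rmin_r|apply Rmin_l]).
  assert (Hd3' : Rmin 1 (Rmin d1 eps2) <= eps2) by (eapply Rle_trans; [apply Rmin_r|apply Rmin_r]).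
  unfold G.
  rewrite <- (chasles _ t t0 T (Hgc tau)).
  replace (RInt (fun s => a s * (l (s - tau) * b s)) t t0 + RInt (fun s => a s * (l (s - tau) * b s)) t0 T -
     RInt (fun s => a s * (l (s - tau0) * b s)) t0 T)
    with (RInt (fun s => a s * (l (s - tau) * b s)) t t0 +
          RInt (fun s => a s * (l (s - tau) * b s) - a s * (l (s - tau0) * b s)) t0 T)
    by (rewrite RInt_minus' by auto; ring).
  eapply Rle_lt_trans. apply Rabs_triang.
  assert (P1 : Rabs (RInt (fun s => a s * (l (s - tau) * b s)) t t0) <= Rabs (t0 - t) * (Hm * Lb)).
  { apply RInt_abs_le2; auto. intros x Hx.
    assert (Hxj : j1 <= x <= j2).
    { apply Rabs_def2 in Ht. unfold j1, j2 in *. unfold Rmin, Rmax in *. repeat destruct Rle_dec; lra. }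
    replace (a x * (l (x - tau) * b x)) with ((a x * b x) * l (x - tau)) by ring.
    rewrite Rabs_mult. apply Rmult_le_compat; try apply Rabs_pos; auto. }
  assert (P2 : Rabs (RInt (fun s => a s * (l (s - tau) * b s) - a s * (l (s - tau0) * b s)) t0 T)
               <= Rabs (T - t0) * (Hm * eps1)).
  { apply RInt_abs_le2. apply Ct_minus; auto. intros x Hx.
    assert (Hxj : j1 <= x <= j2).
    { unfold j1, j2 in *. unfold Rmin, Rmax in *. repeat destruct Rle_dec; lra. }
    replace (a x * (l (x - tau) * b x) - a x * (l (x - tau0) * b x)) with ((a x * b x) * (l (x - tau) - l (x - tau0))) by ring.
    rewrite Rabs_mult. apply Rmult_le_compat; try apply Rabs_pos; auto.
    left. apply Hd1.
    - apply Rabs_def2 in Htau. lra.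
    - lra.
    - replace (x - tau - (x - tau0)) with (- (tau - tau0)) by ring. rewrite Rabs_Ropp. lra. }
  assert (Q1 : Rabs (t0 - t) * (Hm * Lb) <= eps / 2).
  { rewrite Rabs_minus_sym. apply Rle_trans with (eps2 * (Hm * Lb)).
    apply Rmult_le_compat_r. nra. lra.
    unfold eps2. apply Rle_trans with (eps / (2 * (Hm * Lb + 1)) * (Hm * Lb + 1)).
    apply Rmult_le_compat_l. left; auto. lra. right. field. nra. }
  assert (Q2 : Rabs (T - t0) * (Hm * eps1) < eps / 2).
  { unfold eps1. assert (0 <= Rabs (T - t0)) by apply Rabs_pos.
    apply Rle_lt_trans with (eps / 2 * ((Rabs (T - t0) * Hm) / ((Hm + 1) * (Rabs (T - t0) + 1)))).
    right. field. nra.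
    assert (0 < eps) by apply eps.
    assert (Rabs (T - t0) * Hm / ((Hm + 1) * (Rabs (T - t0) + 1)) < 1).
    { apply Rlt_div_l. nra. nra. }
    nra. }
  lra.
Qed.

Definition Kf T q eta c k lam u tau t :=
  exp (- Aint k u T) * (c / 2 * lamc T lam (T - tau))
  + RInt (fun s => exp (- Aint k u s) * (lamc T lam (s - tau) * Fq q eta (u s))) t T.

Lemma Ct_expA k u : Ct u -> Ct (fun s => exp (- Aint k u s)).
Proof. intros Hu. apply (Ct_comp (fun s => - Aint k u s) exp). apply Ct_opp. apply Aint_cont; auto. apply Ct_exp. Qed.

Lemma Ct_H T q eta k lam u tau : Ct u -> Ct (lamc T lam) ->
  Ct (fun s => exp (- Aint k u s) * (lamc T lam (s - tau) * Fq q eta (u s))).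
Proof.
  intros Hu HL. apply Ct_mult. apply Ct_expA; auto. apply Ct_mult.
  apply (Ct_comp (fun s => s - tau) (lamc T lam)); auto. apply Ct_minus. apply Ct_id. apply Ct_const.
  apply Ct_comp; auto. apply Ct_Fq.
Qed.

Lemma Lamf_alt T q eta c k lam u tau t : Ct u -> Ct (lamc T lam) ->
  Lamf T q eta c k lam u tau t = exp (Aint k u t) * Kf T q eta c k lam u tau t.
Proof.
  intros Hu HL. unfold Lamf, Kf, Ek.
  rewrite Rmult_plus_distr_l. f_equal.
  - unfold Rminus. rewrite exp_plus. ring.
  - rewrite <- RInt_scal' by (apply Ct_H; auto). apply RInt_ext'. intros x _.
    unfold Rminus. rewrite exp_plus. ring.
Qed.

Lemma is_derive_Req (f : R -> R) x l1 l2 : is_derive f x l1 -> l1 = l2 -> is_derive f x l2.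
Proof. intros H E; subst; auto. Qed.

Lemma Lamf_derive T q eta c k lam u tau t : Ct u -> Ct (lamc T lam) ->
  is_derive (fun t => Lamf T q eta c k lam u tau t) t
    ((2 * k + 4 * u t) * Lamf T q eta c k lam u tau t - lamc T lam (t - tau) * Fq q eta (u t)).
Proof.
  intros Hu HL.
  apply is_derive_ext with (f := fun t => exp (Aint k u t) * Kf T q eta c k lam u tau t).
  { intros x. rewrite Lamf_alt; auto. }
  assert (D1 : is_derive (fun t => exp (Aint k u t)) t ((2 * k + 4 * u t) * exp (Aint k u t))).
  { apply (is_derive_comp exp (Aint k u)). apply is_derive_exp. apply Aint_derive; auto. }
  assert (D2 : is_derive (fun t => Kf T q eta c k lam u tau t) t
     (- (exp (- Aint k u t) * (lamc T lam (t - tau) * Fq q eta (u t))))).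
  { unfold Kf. eapply is_derive_Req.
    apply (is_derive_plus (K:=R_AbsRing) (V:=R_NormedModule)). apply (is_derive_const (K:=R_AbsRing) (V:=R_NormedModule)).
    apply (RInt_upper_deriv (fun s => exp (- Aint k u s) * (lamc T lam (s - tau) * Fq q eta (u s)))).
    apply Ct_H; auto. unfold plus, zero; simpl. ring. }
  assert (D := is_derive_mult _ _ _ _ _ D1 D2 Rmult_comm).
  eapply is_derive_Req. exact D.
  rewrite Lamf_alt by auto. unfold plus, zero, mult; simpl.
  replace (exp (Aint k u t) * - (exp (- Aint k u t) * (lamc T lam (t - tau) * Fq q eta (u t))))
    with (- (exp (Aint k u t) * exp (- Aint k u t)) * (lamc T lam (t - tau) * Fq q eta (u t))) by ring.
  rewrite <- exp_plus. rewrite Rplus_opp_r, exp_0. ring.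
Qed.

Lemma Lamf_cont2 T q eta c k lam u Lb tau t : Ct u -> Ct (lamc T lam) -> (forall x, Rabs (lamc T lam x) <= Lb) ->
  continuous (fun p : R * R => Lamf T q eta c k lam u (fst p) (snd p)) (tau, t).
Proof.
  intros Hu HL HLb.
  apply continuous_ext with (f := fun p : R * R => exp (Aint k u (snd p)) * Kf T q eta c k lam u (fst p) (snd p)).
  { intros p. rewrite Lamf_alt; auto. }
  apply (continuous_mult (fun p : R * R => exp (Aint k u (snd p))) (fun p : R * R => Kf T q eta c k lam u (fst p) (snd p))).
  - apply (continuous_comp (fun p : R * R => snd p) (fun s => exp (Aint k u s))). apply continuous_snd.
    apply (Ct_comp (Aint k u) exp). apply Aint_cont; auto. apply Ct_exp.
  - unfold Kf. apply (continuous_plus (fun p : R * R => exp (- Aint k u T) * (c / 2 * lamc T lam (T - fst p)))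
       (fun p : R * R => RInt (fun s => exp (- Aint k u s) * (lamc T lam (s - fst p) * Fq q eta (u s))) (snd p) T)).
    + apply (continuous_comp (fun p : R * R => fst p) (fun x => exp (- Aint k u T) * (c / 2 * lamc T lam (T - x)))).
      apply continuous_fst. apply Ct_mult. apply Ct_const. apply Ct_mult. apply Ct_const.
      apply (Ct_comp (fun x => T - x) (lamc T lam)); auto. apply Ct_minus. apply Ct_const. apply Ct_id.
    + apply (G_cont (fun s => exp (- Aint k u s)) (fun s => Fq q eta (u s)) (lamc T lam) T Lb tau t).
      apply Ct_expA; auto. apply Ct_comp; auto. apply Ct_Fq. auto. auto.
Qed.

Lemma Psi_cont T q eta c k lam u Lb : Ct u -> Ct (lamc T lam) -> (forall x, Rabs (lamc T lam x) <= Lb) ->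
  Ct (Psi T q eta c k lam u).
Proof.
  intros Hu HL HLb x. unfold Psi. apply (continuous_plus (fun _ => q / 2) (fun x => Lamf T q eta c k lam u x x)).
  apply continuous_const.
  apply (continuous_comp_2 (fun x => x) (fun x => x) (fun a b => Lamf T q eta c k lam u a b)).
  apply continuous_id. apply continuous_id. apply Lamf_cont2 with (Lb := Lb); auto.
Qed.

Definition Phi T q eta c k lam u := fun x => Psi T q eta c k lam u (clamp T x).

Lemma Phi_cont T q eta c k lam u Lb : 0 <= T -> Ct u -> Ct (lamc T lam) -> (forall x, Rabs (lamc T lam x) <= Lb) ->
  Ct (Phi T q eta c k lam u).
Proof. intros HT Hu HL HLb. unfold Phi. apply (Ct_comp (clamp T)). apply clamp_cont; auto. apply Psi_cont with Lb; auto. Qed.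


Lemma half_pow_pos n : 0 < (/ 2) ^ n.
Proof. apply pow_lt. lra. Qed.

Lemma half_pow_small y : 0 < y -> exists n, (/ 2) ^ n < y.
Proof.
  intros Hy. destruct (pow_lt_1_zero (/ 2) ltac:(rewrite Rabs_right; lra) y Hy) as [N HN].
  exists N. specialize (HN N (le_n N)). rewrite Rabs_right in HN. auto. left; apply half_pow_pos.
Qed.

Lemma zero_of_half x C : (forall n, Rabs x <= C * (/ 2) ^ n) -> x = 0.
Proof.
  intros H. destruct (Req_dec x 0) as [|Hx]; auto. exfalso.
  assert (Ha : 0 < Rabs x) by (apply Rabs_pos_lt; auto).
  assert (HC : 0 < C). { specialize (H 0%nat). simpl in H. lra. }
  destruct (half_pow_small (Rabs x / C)) as [n Hn]. apply Rdiv_lt_0_compat; auto.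
  specialize (H n). apply (Rmult_lt_compat_l C) in Hn; auto.
  replace (C * (Rabs x / C)) with (Rabs x) in Hn by (field; lra). lra.
Qed.

Lemma geom_tail (a : nat -> R) D : (forall n, Rabs (a (S n) - a n) <= D * (/ 2) ^ n) ->
  forall n p, Rabs (a (p + n)%nat - a n) <= 2 * D * (/ 2) ^ n * (1 - (/ 2) ^ p).
Proof.
  intros H n p. induction p.
  - simpl. replace (a n - a n) with 0 by ring. rewrite Rabs_R0. lra.
  - replace (S p + n)%nat with (S (p + n)) by lia.
    replace (a (S (p + n)) - a n) with ((a (S (p + n)) - a (p + n)%nat) + (a (p + n)%nat - a n)) by ring.
    eapply Rle_trans. apply Rabs_triang. eapply Rle_trans. apply Rplus_le_compat. apply H. apply IHp.
    rewrite pow_add. simpl. lra.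
Qed.

Lemma geom_limit (a : nat -> R) D : 0 <= D -> (forall n, Rabs (a (S n) - a n) <= D * (/ 2) ^ n) ->
  exists l, is_lim_seq a l /\ forall n, Rabs (l - a n) <= 2 * D * (/ 2) ^ n.
Proof.
  intros HD H.
  assert (Ht : forall n p, Rabs (a (p + n)%nat - a n) <= 2 * D * (/ 2) ^ n).
  { intros n p. eapply Rle_trans. apply geom_tail; auto.
    assert (0 < (/2)^p) by apply half_pow_pos. assert (0 < (/2)^n) by apply half_pow_pos.
    assert (0 <= 2 * D * (/ 2) ^ n) by (apply Rmult_le_pos; lra).
    assert (0 <= 2 * D * (/ 2) ^ n * (/ 2) ^ p) by (apply Rmult_le_pos; lra). nra. }
  assert (Hc : ex_lim_seq_cauchy a).
  { intros eps. destruct (half_pow_small (eps / (4 * D + 1))) as [N HN].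
    apply Rdiv_lt_0_compat. apply eps. lra.
    exists N. intros n m Hn Hm.
    assert (B1 : Rabs (a n - a N) <= 2 * D * (/ 2) ^ N).
    { replace n with ((n - N) + N)%nat by lia. apply Ht. }
    assert (B2 : Rabs (a m - a N) <= 2 * D * (/ 2) ^ N).
    { replace m with ((m - N) + N)%nat by lia. apply Ht. }
    replace (a n - a m) with ((a n - a N) - (a m - a N)) by ring.
    eapply Rle_lt_trans. apply Rabs_triang. rewrite Rabs_Ropp.
    assert (0 < eps) by apply eps.
    assert (4 * D * (/ 2) ^ N < eps).
    { apply (Rmult_lt_compat_l (4 * D + 1)) in HN; [|lra].
      replace ((4 * D + 1) * (eps / (4 * D + 1))) with (pos eps) in HN by (field; lra).
      assert (0 < (/2)^N) by apply half_pow_pos. nra. }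
    lra. }
  apply ex_lim_seq_cauchy_corr in Hc.
  destruct Hc as [l Hl]. exists l. split; auto.
  intros n. apply is_lim_seq_incr_n with (N := n) in Hl.
  apply Rabs_le_between. split.
  - assert (HH : Rbar_le (a n - 2 * D * (/ 2) ^ n) l).
    { apply (is_lim_seq_le (fun _ => a n - 2 * D * (/ 2) ^ n) (fun m => a (m + n)%nat)); auto.
      intros m. specialize (Ht n m). apply Rabs_le_between in Ht. lra. apply is_lim_seq_const. }
    change (a n - 2 * D * (/ 2) ^ n <= l) in HH. simpl. lra.
  - assert (HH : Rbar_le l (a n + 2 * D * (/ 2) ^ n)).
    { apply (is_lim_seq_le (fun m => a (m + n)%nat) (fun _ => a n + 2 * D * (/ 2) ^ n)); auto.
      intros m. specialize (Ht n m). apply Rabs_le_between in Ht. lra. apply is_lim_seq_const. }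
    change (l <= a n + 2 * D * (/ 2) ^ n) in HH. simpl. lra.
Qed.

Fixpoint iter_u T q eta c k lam (n : nat) : R -> R :=
  match n with
  | O => fun _ => q / 2
  | S n => Phi T q eta c k lam (iter_u T q eta c k lam n)
  end.

Lemma fixed_point_exists T q eta c k lam Lm B :
  0 < T -> 0 < q -> 0 < eta -> 0 < c -> 0 < k -> 0 <= B -> 4 * B <= k ->
  q / 2 + (c / 2 * Lm + Lm * FmB q eta B / k) <= B ->
  (2 * c * Lm + 4 * T * Lm * FmB q eta B + Lm * FLB q B) / k <= / 2 ->
  (forall x, 0 <= lamc T lam x <= Lm) -> Ct (lamc T lam) ->
  exists u, Ct u /\ (forall x, Rabs (u x) <= B) /\ (forall x, u x = u (clamp T x)) /\
    (forall t, 0 <= t <= T -> Psi T q eta c k lam u t = u t).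
Proof.
  intros HT Hq He Hc Hk HB HkB Hball Hth HL HLc.
  set (it := iter_u T q eta c k lam).
  assert (HLb : forall x, Rabs (lamc T lam x) <= Lm).
  { intros x. specialize (HL x). rewrite Rabs_right; lra. }
  assert (HLm : 0 <= Lm) by (specialize (HL 0); lra).
  assert (HFm : 0 <= FmB q eta B) by (unfold FmB; nra).
  assert (HFL : 0 <= FLB q B) by (unfold FLB; nra).
  assert (Hpos1 : 0 <= c / 2 * Lm) by nra.
  assert (Hpos2 : 0 <= Lm * FmB q eta B / k).
  { unfold Rdiv; apply Rmult_le_pos; [nra| left; apply Rinv_0_lt_compat; lra]. }
  assert (Hbnd : forall u, Ct u -> (forall x, Rabs (u x) <= B) -> forall x, Rabs (Phi T q eta c k lam u x) <= B).
  { intros u Hu HuB x. unfold Phi, Psi. eapply Rle_trans. apply Rabs_triang.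
    rewrite Rabs_right by lra. 
    assert (Rabs (Lamf T q eta c k lam u (clamp T x) (clamp T x)) <= c / 2 * Lm + Lm * FmB q eta B / k).
    { apply Lamf_bound; auto. apply clamp_in; lra. }
    lra. }
  assert (Hlip : forall u v d, Ct u -> Ct v -> (forall x, Rabs (u x) <= B) -> (forall x, Rabs (v x) <= B) ->
     0 <= d -> (forall x, Rabs (u x - v x) <= d) -> forall t, 0 <= t <= T ->
     Rabs (Psi T q eta c k lam u t - Psi T q eta c k lam v t) <= d / 2).
  { intros u v d Hu Hv HuB HvB Hd Huv t Ht. unfold Psi.
    replace (q / 2 + Lamf T q eta c k lam u t t - (q / 2 + Lamf T q eta c k lam v t t))
      with (Lamf T q eta c k lam u t t - Lamf T q eta c k lam v t t) by ring.
    eapply Rle_trans. apply (Lamf_lip T q eta c k lam u v Lm B d t t); auto.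
    replace ((2 * c * Lm + 4 * T * Lm * FmB q eta B + Lm * FLB q B) * d / k)
       with ((2 * c * Lm + 4 * T * Lm * FmB q eta B + Lm * FLB q B) / k * d) by (field; lra).
    replace (d / 2) with (/ 2 * d) by field. apply Rmult_le_compat_r; auto. }
  assert (Hinv : forall n, Ct (it n) /\ forall x, Rabs (it n x) <= B).
  { induction n as [|n [IHc IHb]]; simpl.
    - split. apply Ct_const. intros. unfold it; simpl. rewrite Rabs_right; lra.
    - split. apply Phi_cont with Lm; auto. lra. apply Hbnd; auto. }
  assert (Hcl : forall n x, it n x = it n (clamp T x)).
  { intros [|n] x; unfold it; simpl. auto. unfold Phi. rewrite clamp_idem; auto. lra. }
  assert (Hdiff : forall n x, Rabs (it (S n) x - it n x) <= 2 * B * (/ 2) ^ n).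
  { induction n as [|n IH]; intros x.
    - simpl pow. eapply Rle_trans. apply Rabs_triang. rewrite Rabs_Ropp.
      destruct (Hinv 1%nat) as [_ H1]. destruct (Hinv 0%nat) as [_ H0].
      specialize (H1 x). specialize (H0 x). lra.
    - change (it (S (S n)) x) with (Phi T q eta c k lam (it (S n)) x).
      change (it (S n) x) with (Phi T q eta c k lam (it n) x).
      unfold Phi. destruct (Hinv (S n)) as [C1 B1]. destruct (Hinv n) as [C0 B0].
      eapply Rle_trans. apply Hlip; auto. apply Rmult_le_pos. lra. left; apply half_pow_pos.
      apply clamp_in; lra. simpl. lra. }
  set (u := fun x => real (Lim_seq (fun n => it n x))).
  assert (Hu_lim : forall x n, Rabs (u x - it n x) <= 4 * B * (/ 2) ^ n).
  { intros x n. destruct (geom_limit (fun n => it n x) (2 * B) ltac:(lra) (fun n => Hdiff n x)) as [l [Hl Hb]].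
    unfold u. rewrite (is_lim_seq_unique _ _ Hl). simpl. replace (4 * B) with (2 * (2 * B)) by ring. apply Hb. }
  assert (HuB : forall x, Rabs (u x) <= B).
  { intros x. apply Rnot_lt_le. intros Hlt.
    destruct (half_pow_small ((Rabs (u x) - B) / (4 * B + 1))) as [n Hn].
    apply Rdiv_lt_0_compat; lra.
    specialize (Hu_lim x n). destruct (Hinv n) as [_ Hb]. specialize (Hb x).
    assert (Rabs (u x) <= B + 4 * B * (/ 2) ^ n).
    { replace (u x) with ((u x - it n x) + it n x) by ring. eapply Rle_trans. apply Rabs_triang. lra. }
    apply (Rmult_lt_compat_l (4 * B + 1)) in Hn; [|lra].
    replace ((4 * B + 1) * ((Rabs (u x) - B) / (4 * B + 1))) with (Rabs (u x) - B) in Hn by (field; lra).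
    assert (0 < (/2)^n) by apply half_pow_pos. nra. }
  assert (HuC : Ct u).
  { intros x. apply cont_ed. intros eps.
    assert (Heps3 : 0 < eps / (3 * (4 * B + 1))) by (apply Rdiv_lt_0_compat; [apply eps | lra]).
    destruct (half_pow_small _ Heps3) as [n Hn].
    assert (Hne : 4 * B * (/ 2) ^ n < eps / 3).
    { apply (Rmult_lt_compat_l (4 * B + 1)) in Hn; [|lra].
      replace ((4 * B + 1) * (eps / (3 * (4 * B + 1)))) with (eps / 3) in Hn by (field; lra).
      assert (0 < (/2)^n) by apply half_pow_pos. nra. }
    destruct (Hinv n) as [Cn _].
    assert (He3 : 0 < eps / 3) by (apply Rdiv_lt_0_compat; [apply eps|lra]).
    destruct (cont_ed_inv _ x (Cn x) (mkposreal _ He3)) as [d Hd].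
    exists d. intros y Hy. specialize (Hd y Hy). simpl in Hd.
    replace (u y - u x) with ((u y - it n y) + (it n y - it n x) - (u x - it n x)) by ring.
    eapply Rle_lt_trans. apply Rabs_triang. rewrite Rabs_Ropp.
    eapply Rle_lt_trans. apply Rplus_le_compat_r. apply Rabs_triang.
    assert (H1 := Hu_lim y n). assert (H2 := Hu_lim x n). lra. }
  exists u. split; [auto|split; [auto|split]].
  - intros x. unfold u. f_equal. apply Lim_seq_ext. intros n. apply Hcl.
  - intros t Ht.
    assert (E : forall n, it (S n) t = Psi T q eta c k lam (it n) t).
    { intros n. unfold it; simpl. unfold Phi. rewrite clamp_id; auto. }
    assert (Z : Psi T q eta c k lam u t - u t = 0).
    { apply zero_of_half with (C := 4 * B). intros n.
      destruct (Hinv n) as [Cn Bn].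
      replace (Psi T q eta c k lam u t - u t) with
        ((Psi T q eta c k lam u t - Psi T q eta c k lam (it n) t) - (u t - it (S n) t)) by (rewrite E; ring).
      eapply Rle_trans. apply Rabs_triang. rewrite Rabs_Ropp.
      assert (A1 : Rabs (Psi T q eta c k lam u t - Psi T q eta c k lam (it n) t) <= 4 * B * (/ 2) ^ n / 2).
      { apply Hlip; auto. apply Rmult_le_pos. lra. left; apply half_pow_pos. }
      assert (A2 := Hu_lim t (S n)). simpl pow in A2. lra. }
    lra.
Qed.


Lemma wc (f : R -> R) (D : R -> Prop) x : filterlim f (within D (locally x)) (locally (f x)) ->
  forall eps : posreal, exists d : posreal, forall y, Rabs (y - x) < d -> D y -> Rabs (f y - f x) < eps.
Proof.
  intros H eps. apply filterlim_locally with (eps := eps) in H.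
  destruct H as [d Hd]. exists d. intros y Hy HD. apply (Hd y Hy HD).
Qed.

Lemma deriv_cpt f x d : is_derive f x d -> continuity_pt f x.
Proof. intros H. apply continuity_pt_filterlim. apply (ex_derive_continuous (V:=R_NormedModule)). exists d; auto. Qed.

Lemma zero_deriv (f : R -> R) a b : a < b -> (forall x, a < x < b -> is_derive f x 0) ->
  filterlim f (within (fun y => a <= y <= b) (locally a)) (locally (f a)) ->
  filterlim f (within (fun y => a <= y <= b) (locally b)) (locally (f b)) ->
  f a = f b.
Proof.
  intros Hab Hd Ha Hb.
  assert (Hin : forall x y, a < x -> x <= y -> y < b -> f x = f y).
  { intros x y Hx Hxy Hy. destruct (MVT_gen f x y (fun _ => 0)) as [c0 [_ Hc]].
    - intros z Hz. apply Hd. rewrite Rmin_left in Hz by lra. rewrite Rmax_right in Hz by lra. lra.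
    - intros z Hz. rewrite Rmin_left in Hz by lra. rewrite Rmax_right in Hz by lra.
      apply deriv_cpt with 0. apply Hd. lra.
    - lra. }
  destruct (Req_dec (f a) (f b)) as [|Hne]; auto. exfalso.
  assert (He : 0 < Rabs (f a - f b) / 2) by (apply Rdiv_lt_0_compat; [apply Rabs_pos_lt; lra | lra]).
  destruct (wc f _ a Ha (mkposreal _ He)) as [da Hda].
  destruct (wc f _ b Hb (mkposreal _ He)) as [db Hdb]. simpl in *. assert (0 < da) by apply cond_pos. assert (0 < db) by apply cond_pos.
  set (h := Rmin (Rmin da db) ((b - a) / 2) / 2).
  assert (Hh : 0 < h).
  { unfold h. apply Rdiv_lt_0_compat; [|lra]. apply Rmin_pos. apply Rmin_pos. apply da. apply db. lra. }
  assert (Hh1 : h < da).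
  { unfold h. assert (Rmin (Rmin da db) ((b - a) / 2) <= da) by (eapply Rle_trans; apply Rmin_l). lra. }
  assert (Hh2 : h < db).
  { unfold h. assert (Rmin (Rmin da db) ((b - a) / 2) <= db) by (eapply Rle_trans; [apply Rmin_l|apply Rmin_r]). lra. }
  assert (Hh3 : h <= (b - a) / 4).
  { unfold h. assert (Rmin (Rmin da db) ((b - a) / 2) <= (b - a) / 2) by apply Rmin_r. lra. }
  assert (E := Hin (a + h) (b - h) ltac:(lra) ltac:(lra) ltac:(lra)).
  assert (A1 : Rabs (f (a + h) - f a) < Rabs (f a - f b) / 2).
  { apply Hda. replace (a + h - a) with h by ring. rewrite Rabs_right; lra. lra. }
  assert (A2 : Rabs (f (b - h) - f b) < Rabs (f a - f b) / 2).
  { apply Hdb. replace (b - h - b) with (- h) by ring. rewrite Rabs_Ropp, Rabs_right; lra. lra. }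
  assert (Rabs (f a - f b) <= Rabs (f (a + h) - f a) + Rabs (f (b - h) - f b)).
  { replace (f a - f b) with (- (f (a + h) - f a) + (f (b - h) - f b)) by (rewrite E; ring).
    eapply Rle_trans. apply Rabs_triang. rewrite Rabs_Ropp. lra. }
  lra.
Qed.

Lemma gronwall (D : R -> R) T K : 0 < T -> 0 <= K -> Ct D -> (forall x, 0 <= D x) ->
  (forall t, 0 <= t <= T -> D t <= K * RInt D t T) -> forall t, 0 <= t <= T -> D t = 0.
Proof.
  intros HT HK HD Hpos H t Ht.
  set (Q := fun x => exp (K * x) * RInt D x T).
  assert (HQd : forall x, is_derive Q x (K * exp (K * x) * RInt D x T + exp (K * x) * (- D x))).
  { intros x. unfold Q.
    assert (Dk : is_derive (fun x => K * x) x K) by (auto_derive; auto; ring).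
    assert (De : is_derive (fun x => exp (K * x)) x (K * exp (K * x))).
    { eapply is_derive_Req. apply (is_derive_comp exp (fun x => K * x)). apply is_derive_exp. exact Dk.
      reflexivity. }
    eapply is_derive_Req.
    apply (is_derive_mult (fun x => exp (K * x)) (fun x => RInt D x T)). exact De.
    apply RInt_upper_deriv; auto. apply Rmult_comm.
    unfold plus, mult; simpl. ring. }
  assert (HI : 0 <= RInt D t T) by (apply RInt_nonneg; auto; lra).
  assert (HQ : Q t <= Q T).
  { destruct (Req_dec t T) as [->|Hne]. lra.
    destruct (MVT_gen Q t T _ (fun x _ => HQd x)) as [c0 [Hc0 E]].
    - intros x _. apply deriv_cpt with (K * exp (K * x) * RInt D x T + exp (K * x) * (- D x)). apply HQd.
    - rewrite Rmin_left in Hc0 by lra. rewrite Rmax_right in Hc0 by lra.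
      assert (0 <= K * exp (K * c0) * RInt D c0 T + exp (K * c0) * - D c0).
      { specialize (H c0 ltac:(lra)). assert (0 < exp (K * c0)) by apply exp_pos.
        replace (K * exp (K * c0) * RInt D c0 T + exp (K * c0) * - D c0)
          with (exp (K * c0) * (K * RInt D c0 T - D c0)) by ring. apply Rmult_le_pos; lra. }
      nra. }
  assert (HQT : Q T = 0) by (unfold Q; rewrite RInt_pt; ring).
  assert (HI0 : RInt D t T = 0).
  { rewrite HQT in HQ. unfold Q in HQ. assert (0 < exp (K * t)) by apply exp_pos. nra. }
  specialize (H t Ht). specialize (Hpos t). rewrite HI0 in H. lra.
Qed.


Lemma within_le {T : UniformSpace} (D : T -> Prop) (x : T) : filter_le (within D (locally x)) (locally x).
Proof. intros P [d Hd]. exists d. intros y Hy _. apply Hd; auto. Qed.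

Lemma Lamf_terminal T q eta c k lam u tau : 0 <= T -> 0 <= tau <= T ->
  Lamf T q eta c k lam u tau T = c / 2 * lam (T - tau).
Proof.
  intros HT Ht. unfold Lamf, Ek. rewrite RInt_pt. replace (Aint k u T - Aint k u T) with 0 by ring.
  rewrite exp_0. unfold lamc. rewrite clamp_id by lra. ring.
Qed.

Lemma existence_sol T q eta c k lam u Lm :
  0 <= T -> Ct u -> Ct (lamc T lam) -> (forall x, Rabs (lamc T lam x) <= Lm) ->
  (forall t, 0 <= t <= T -> Psi T q eta c k lam u t = u t) ->
  is_solution T q eta c k lam (Lamf T q eta c k lam u).
Proof.
  intros HT Hu HLc HLb Hfix. split; [|split].
  - intros tau t _. eapply filterlim_filter_le_1. apply within_le.
    apply (Lamf_cont2 T q eta c k lam u Lm tau t); auto.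
  - intros tau t H0 H1 H2.
    eexists. split. apply Lamf_derive; auto.
    assert (Hf := Hfix t ltac:(lra)). unfold Psi in Hf.
    assert (El : lamc T lam (t - tau) = lam (t - tau)) by (unfold lamc; rewrite clamp_id; lra).
    rewrite El. rewrite <- Hf. unfold Fq. generalize (Lamf T q eta c k lam u tau t) (Lamf T q eta c k lam u t t) (lam (t - tau)). intros L W l. field.
  - intros tau Ht. apply Lamf_terminal; auto.
Qed.


Definition WD (a b x : R) := within (fun y => a <= y <= b) (locally x).



Lemma fl_mult (f g : R -> R) a b x0 fa ga :
  filterlim f (WD a b x0) (locally fa) -> filterlim g (WD a b x0) (locally ga) ->
  filterlim (fun x => f x * g x) (WD a b x0) (locally (fa * ga)).
Proof.
  intros Hf Hg. apply (filterlim_comp_2 (F:=WD a b x0) (G:=locally fa) (H:=locally ga) (FF := within_filter _ _ _ (@filter_filter _ _ (locally_filter x0))) f g Rmult); auto.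
  apply (filterlim_mult (K:=R_AbsRing) fa ga).
Qed.

Lemma fl_minus (f g : R -> R) a b x0 fa ga :
  filterlim f (WD a b x0) (locally fa) -> filterlim g (WD a b x0) (locally ga) ->
  filterlim (fun x => f x - g x) (WD a b x0) (locally (fa - ga)).
Proof.
  intros Hf Hg. apply (filterlim_comp_2 (F:=WD a b x0) (G:=locally fa) (H:=locally ga) (FF := within_filter _ _ _ (@filter_filter _ _ (locally_filter x0))) f g Rminus); auto.
  apply (filterlim_comp_2 (G:=locally fa) (H:=locally (opp ga)) (FF := filter_prod_filter _ _ _ _ (@filter_filter _ _ (locally_filter fa)) (@filter_filter _ _ (locally_filter ga)))
     fst (fun p : R * R => opp (snd p)) (@plus R_NormedModule)).
  apply filterlim_fst. apply (filterlim_comp _ _ _ snd opp _ (locally ga)). apply filterlim_snd.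
  apply (filterlim_opp (K:=R_AbsRing) ga).
  apply (filterlim_plus (K:=R_AbsRing) fa (opp ga)).
Qed.

Lemma fl_cont (g : R -> R) a b x0 : Ct g -> filterlim g (WD a b x0) (locally (g x0)).
Proof. intros H. eapply filterlim_filter_le_1. apply within_le. apply H. Qed.

Lemma fl_restrict (f : R -> R) a b a' x0 L : a <= a' ->
  filterlim f (WD a b x0) L -> filterlim f (WD a' b x0) L.
Proof.
  intros Ha H. eapply filterlim_filter_le_1; [|exact H].
  intros P [d Hd]. exists d. intros y Hy HD. apply Hd; auto. lra.
Qed.

Lemma slice_cont TT (Lam' : R -> R -> R) tau s0 : 0 <= tau -> tau <= s0 <= TT ->
  filterlim (fun p : R * R => Lam' (fst p) (snd p)) (within (sol_domain TT) (locally (tau, s0))) (locally (Lam' tau s0)) ->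
  filterlim (fun s => Lam' tau s) (WD tau TT s0) (locally (Lam' tau s0)).
Proof.
  intros Ht Hs H.
  apply (filterlim_comp _ _ _ (fun s => (tau, s)) (fun p : R * R => Lam' (fst p) (snd p)) _ (within (sol_domain TT) (locally (tau, s0)))); auto.
  intros P [d Hd]. exists d. intros y Hy HD. apply Hd.
  split. apply ball_center. auto. unfold sol_domain; simpl. lra.
Qed.

Lemma diag_cont TT (Lam' : R -> R -> R) q : 0 <= TT ->
  (forall tau t, sol_domain TT (pair tau t) ->
     filterlim (fun p : (R * R)%type => Lam' (fst p) (snd p))
       (within (sol_domain TT) (locally (pair tau t))) (locally (Lam' tau t))) ->
  Ct (fun x => Lam' (clamp TT x) (clamp TT x) + q / 2).
Proof.
  intros HTT Hc x. apply cont_ed. intros eps.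
  assert (Hy0 := clamp_in TT x HTT). set (y0 := clamp TT x) in *.
  assert (H := Hc y0 y0 ltac:(unfold sol_domain; simpl; lra)).
  apply filterlim_locally with (eps := eps) in H. destruct H as [d Hd].
  exists d. intros z Hz.
  replace (Lam' (clamp TT z) (clamp TT z) + q / 2 - (Lam' y0 y0 + q / 2))
    with (Lam' (clamp TT z) (clamp TT z) - Lam' y0 y0) by ring.
  assert (Hcz := clamp_in TT z HTT).
  assert (Hb : Rabs (clamp TT z - y0) < d) by (eapply Rle_lt_trans; [apply clamp_lip; auto|auto]).
  assert (HH := Hd (clamp TT z, clamp TT z) (conj Hb Hb) ltac:(unfold sol_domain; simpl; lra)). exact HH.
Qed.

Lemma slice_unique T q eta c k lam (Lam' : R -> R -> R) Lm tau t :
  0 < T -> 0 <= k -> Ct (lamc T lam) -> (forall x, Rabs (lamc T lam x) <= Lm) ->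
  is_solution T q eta c k lam Lam' ->
  0 <= tau -> tau <= t <= T ->
  Lam' tau t = Lamf T q eta c k lam (fun x => Lam' (clamp T x) (clamp T x) + q / 2) tau t.
Proof.
  intros HT Hk HLc HLb [Hc [Hd Hterm]] Htau Ht.
  set (u' := fun x => Lam' (clamp T x) (clamp T x) + q / 2).
  assert (Hu' : Ct u') by (apply diag_cont; auto; lra).
  set (g := fun s => exp (- Aint k u' s)).
  set (Z := fun s => g s * (Lam' tau s - Lamf T q eta c k lam u' tau s)).
  assert (Hg : Ct g) by (apply Ct_expA; auto).
  assert (HZc : forall s0, tau <= s0 <= T -> filterlim Z (WD tau T s0) (locally (Z s0))).
  { intros s0 Hs0. unfold Z. apply fl_mult. apply fl_cont; auto. apply fl_minus.
    apply slice_cont; auto. apply Hc. unfold sol_domain; simpl; lra.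
    apply fl_cont. intros x. apply (continuous_comp_2 (fun _ => tau) (fun x => x) (fun a b => Lamf T q eta c k lam u' a b)).
    apply continuous_const. apply continuous_id.
    apply Lamf_cont2 with (Lb := Lm); auto. }
  assert (HZd : forall s, tau < s < T -> is_derive Z s 0).
  { intros s Hs. destruct (Hd tau s Htau ltac:(lra) ltac:(lra)) as [d [Hder Heq]].
    assert (D1 : is_derive g s (- (2 * k + 4 * u' s) * g s)).
    { unfold g. eapply is_derive_Req. apply (is_derive_comp exp (fun s => - Aint k u' s)). apply is_derive_exp.
      apply (is_derive_opp (K:=R_AbsRing) (V:=R_NormedModule) (Aint k u')). apply Aint_derive; auto.
      unfold scal, opp; simpl. unfold mult; simpl. ring. }
    assert (D2 := Lamf_derive T q eta c k lam u' tau s Hu' HLc).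
    assert (D3 : is_derive (fun s => Lam' tau s - Lamf T q eta c k lam u' tau s) s
       (d - ((2 * k + 4 * u' s) * Lamf T q eta c k lam u' tau s - lamc T lam (s - tau) * Fq q eta (u' s)))).
    { apply (is_derive_minus (K:=R_AbsRing) (V:=R_NormedModule) (fun s => Lam' tau s)); auto. }
    unfold Z. eapply is_derive_Req. apply (is_derive_mult g); eauto. apply Rmult_comm.
    unfold plus, mult; simpl.
    assert (Eu : u' s = Lam' s s + q / 2) by (unfold u'; rewrite clamp_id; lra).
    assert (El : lamc T lam (s - tau) = lam (s - tau)) by (unfold lamc; rewrite clamp_id; lra).
    rewrite Eu, El. unfold Fq.
    assert (Ed : d = 2 * k * Lam' tau s - 2 * lam (s - tau) * (Lam' s s + q / 2) ^ 2
        + 4 * (Lam' tau s + q / 2 * lam (s - tau)) * (Lam' s s + q / 2) - eta / 2 * lam (s - tau)) by lra.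
    rewrite Ed. field. }
  assert (HZT : Z T = 0).
  { unfold Z. rewrite Hterm by lra. rewrite Lamf_terminal by lra. ring. }
  assert (HZt : Z t = 0).
  { destruct (Req_dec t T) as [->|Hne]; auto. rewrite <- HZT.
    apply zero_deriv. lra. intros x Hx; apply HZd; lra.
    apply fl_restrict with tau. lra. apply HZc; lra.
    apply fl_restrict with tau. lra. apply HZc; lra. }
  unfold Z in HZt. assert (0 < g t) by apply exp_pos.
  apply Rmult_integral in HZt. destruct HZt as [H0|H0]. lra. fold u'. lra.
Qed.


Lemma uniqueness_sol T q eta c k lam Lm B u (Lam' : R -> R -> R) :
  0 < T -> 0 < q -> 0 < eta -> 0 < c -> 0 <= k -> 0 <= B ->
  (forall x, 0 <= lamc T lam x <= Lm) -> Ct (lamc T lam) ->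
  Ct u -> (forall x, Rabs (u x) <= B) -> (forall x, u x = u (clamp T x)) ->
  (forall t, 0 <= t <= T -> Psi T q eta c k lam u t = u t) ->
  is_solution T q eta c k lam Lam' ->
  forall tau t, sol_domain T (pair tau t) -> Lam' tau t = Lamf T q eta c k lam u tau t.
Proof.
  intros HT Hq He Hc Hk HB HL HLc Hu HuB Hucl Hfix Hsol tau t Hdom.
  unfold sol_domain in Hdom; simpl in Hdom.
  assert (HLb : forall x, Rabs (lamc T lam x) <= Lm) by (intros x; specialize (HL x); rewrite Rabs_right; lra).
  set (u' := fun x => Lam' (clamp T x) (clamp T x) + q / 2).
  assert (Hu' : Ct u') by (apply diag_cont; [lra | apply Hsol]).
  assert (Hsl : forall tau t, 0 <= tau -> tau <= t <= T -> Lam' tau t = Lamf T q eta c k lam u' tau t).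
  { intros; apply slice_unique with Lm; auto. }
  assert (Hfix' : forall t, 0 <= t <= T -> Psi T q eta c k lam u' t = u' t).
  { intros s Hs. unfold Psi. rewrite <- Hsl by lra. unfold u'. rewrite clamp_id by lra. ring. }
  destruct (bound_on u' 0 T Hu' ltac:(lra)) as [M' [HM'0 HM']].
  set (M := Rmax B M').
  assert (HM : 0 <= M) by (unfold M; eapply Rle_trans; [apply HB|apply Rmax_l]).
  set (K := exp (4 * M * T) * (2 * c * Lm + 4 * T * Lm * FmB q eta M + Lm * FLB q M)).
  assert (HLm : 0 <= Lm) by (specialize (HL 0); lra).
  assert (HK : 0 <= K).
  { unfold K. apply Rmult_le_pos. left; apply exp_pos. unfold FmB, FLB.
    assert (0 <= 2 * c * Lm) by nra. assert (0 <= 4 * T * Lm * (2 * M ^ 2 + 2 * q * M + eta / 2)).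
    { apply Rmult_le_pos. nra. assert (0 <= M ^ 2) by apply pow2_ge_0. nra. }
    assert (0 <= Lm * (4 * M + 2 * q)) by nra. lra. }
  assert (HD : Ct (fun x => Rabs (u x - u' x))) by (apply Ct_comp; [apply Ct_minus; auto|apply Ct_abs]).
  assert (Heq : forall s, 0 <= s <= T -> Rabs (u s - u' s) = 0).
  { apply gronwall with K; auto. intros; apply Rabs_pos.
    intros s Hs. rewrite <- (Hfix s Hs), <- (Hfix' s Hs). unfold Psi.
    replace (q / 2 + Lamf T q eta c k lam u s s - (q / 2 + Lamf T q eta c k lam u' s s))
      with (Lamf T q eta c k lam u s s - Lamf T q eta c k lam u' s s) by ring.
    unfold K. apply Lamf_lip2; auto.
    intros x Hx. eapply Rle_trans. apply HuB. apply Rmax_l.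
    intros x Hx. eapply Rle_trans. apply HM'; auto. apply Rmax_r. }
  assert (Euu : u' = u).
  { apply functional_extensionality. intros x.
    rewrite Hucl. assert (Hcx := clamp_in T x ltac:(lra)).
    assert (E1 : u' x = u' (clamp T x)) by (unfold u'; rewrite clamp_idem by lra; auto).
    rewrite E1. specialize (Heq (clamp T x) Hcx). apply Rabs_eq_0 in Heq. lra. }
  rewrite Hsl by lra. rewrite Euu. auto.
Qed.


Theorem lemma4p1 (T q eta c : R) (lam : R -> R) :
  0 < T -> 0 < q -> 0 < eta -> 0 < c ->
  (forall x, 0 <= x <= T -> 0 < lam x) ->
  (forall x y, 0 <= x -> x <= y -> y <= T -> lam x <= lam y) ->
  C1_on lam 0 T ->
  lam 0 = 1 ->
  exists C : R, 0 < C /\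
    forall k : R, 0 <= k -> Rmax (4 * C ^ 2) 1 < k ->
      exists Lam : R -> R -> R,
        is_solution T q eta c k lam Lam /\
        forall Lam' : R -> R -> R, is_solution T q eta c k lam Lam' ->
          forall tau t, sol_domain T (pair tau t) -> Lam' tau t = Lam tau t.
Proof.
  intros HT Hq He Hc Hpos Hmono [lam' [Hcont _]] Hl0.
  set (Lm := lam T).
  assert (HLc : Ct (lamc T lam)).
  { intros x. unfold lamc. apply within_clamp. lra. intros y Hy. apply Hcont; auto. }
  assert (HL : forall x, 0 <= lamc T lam x <= Lm).
  { intros x. unfold lamc, Lm. assert (Hx := clamp_in T x ltac:(lra)).
    split. left; apply Hpos; auto. apply Hmono; lra. }
  assert (HLm : 0 <= Lm) by (specialize (HL 0); lra).
  assert (HLb : forall x, Rabs (lamc T lam x) <= Lm) by (intros x; specialize (HL x); rewrite Rabs_right; lra).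
  set (B := q / 2 + c / 2 * Lm + 1).
  assert (HB : 0 <= B) by (unfold B; nra).
  assert (HFm : 0 <= FmB q eta B) by (unfold FmB; nra).
  assert (HFL : 0 <= FLB q B) by (unfold FLB; nra).
  set (S := 2 * c * Lm + 4 * T * Lm * FmB q eta B + Lm * FLB q B).
  assert (HS : 0 <= S).
  { unfold S. assert (0 <= 2 * c * Lm) by nra. assert (0 <= 4 * T * Lm * FmB q eta B).
    { apply Rmult_le_pos; nra. } assert (0 <= Lm * FLB q B) by nra. lra. }
  set (K0 := 4 * B + Lm * FmB q eta B + 2 * S).
  assert (HLF : 0 <= Lm * FmB q eta B) by nra.
  assert (HK0 : 0 <= K0) by (unfold K0; lra).
  exists (K0 + 1). split. lra.
  intros k Hk0 Hk.
  assert (Hk1 : K0 < k).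
  { assert (4 * (K0 + 1) ^ 2 <= Rmax (4 * (K0 + 1) ^ 2) 1) by apply Rmax_l. nra. }
  assert (Hkp : 0 < k) by lra.
  destruct (fixed_point_exists T q eta c k lam Lm B) as [u [Hu [HuB [Hucl Hfix]]]]; auto.
  - unfold K0 in Hk1. lra.
  - assert (Lm * FmB q eta B / k <= 1).
    { apply (Rmult_le_reg_l k); auto. field_simplify; try lra. unfold K0 in Hk1. lra. }
    unfold B at 2. lra.
  - fold S. apply (Rmult_le_reg_l k); auto. field_simplify; try lra. unfold K0 in Hk1. lra.
  - exists (Lamf T q eta c k lam u). split.
    + apply existence_sol with Lm; auto. lra.
    + intros Lam' Hsol tau t Hdom. apply (uniqueness_sol T q eta c k lam Lm B u Lam'); auto.
Qed.
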